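(* For every instance of problem MR and every optimal schedule, the speed $s_{i,j}$ of every task $T_{i,j}$ with $v_{i,j}>0$ satisfies $$\frac{v_{i,j}}{t_{\max}}\le s_{i,j}\le\left(\frac{E}{v_{i,j}}\right)^{\frac{1}{\beta-1}},\qquad t_{\max}=\frac{w_{\max}}{w_{\min}}\left(n\,r_{\max}+n(n+1)\left(\frac{|\mathcal T|\cdot v_{\max}^{\beta}}{E}\right)^{\frac{1}{\beta-1}}\right).$$
   Context: Problem MR. There are jobs $\mathcal J=\{1,\dots,n\}$ and processors $\mathcal P=\{1,\dots,m\}$. Job $j$ has weight $w_j>0$, release date $r_j\ge0$, and a nonempty set of Map tasks and a nonempty set of Reduce tasks, preassigned to processors with at most one task of each job per processor; $T_{i,j}$ is the task of job $j$ on processor $i$, with work $v_{i,j}\ge0$; $\mathcal T$ is the set of all tasks and $|\mathcal T|$ its cardinality. A schedule gives each task a start time and a constant speed $s_{i,j}>0$; the task runs non-preemptively for $v_{i,j}/s_{i,j}$ time units and uses energy $v_{i,j}s_{i,j}^{\beta-1}$, where $\beta>1$ is a fixed constant. Feasibility: each processor runs at most one task at a time; tasks of job $j$ start no earlier than $r_j$; Reduce tasks of job $j$ start only after all Map tasks of job $j$ complete; total energy at most a given budget $E>0$. $C_j$ is the maximum completion time of the tasks of job $j$; the objective is to minimize $\sum_j w_jC_j$. $w_{\min}=\min_j w_j$, $w_{\max}=\max_j w_j$, $r_{\max}=\max_j r_j$, $v_{\max}=\max_{i,j}v_{i,j}$. *)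

(* Defs.v *)
From mathcomp Require Import all_boot all_order all_algebra.
From mathcomp Require Import all_classical all_reals all_analysis.
Set Implicit Arguments. Unset Strict Implicit. Unset Printing Implicit Defensive.
Import Order.TTheory GRing.Theory Num.Theory.
Local Open Scope ring_scope.

(* Instance of problem MR with n jobs ('I_n) and m processors ('I_m).
   kind i j = None          : job j has no task on processor i
   kind i j = Some true     : T_{i,j} is a Map task of job j
   kind i j = Some false    : T_{i,j} is a Reduce task of job j
   v i j : work of T_{i,j};  w j : weight;  r j : release date;
   beta : exponent of the energy model;  E : energy budget. *)

Definition is_task (n m : nat) (kind : 'I_m -> 'I_n -> option bool)
  (i : 'I_m) (j : 'I_n) : bool := kind i j != None.
Definition is_map (n m : nat) (kind : 'I_m -> 'I_n -> option bool)
  (i : 'I_m) (j : 'I_n) : bool := kind i j == Some true.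
Definition is_reduce (n m : nat) (kind : 'I_m -> 'I_n -> option bool)
  (i : 'I_m) (j : 'I_n) : bool := kind i j == Some false.

Definition valid_instance (R : realType) (n m : nat) (w r : 'I_n -> R)
  (kind : 'I_m -> 'I_n -> option bool) (v : 'I_m -> 'I_n -> R)
  (beta E : R) : Prop :=
  (forall j, 0 < w j) /\ (forall j, 0 <= r j) /\
  (forall j, exists i, is_map kind i j) /\
  (forall j, exists i, is_reduce kind i j) /\
  (forall i j, 0 <= v i j) /\ 1 < beta /\ 0 < E.

Definition dur (R : realType) (n m : nat) (v s : 'I_m -> 'I_n -> R)
  (i : 'I_m) (j : 'I_n) : R := v i j / s i j.

Definition energy (R : realType) (n m : nat) (kind : 'I_m -> 'I_n -> option bool)
  (v : 'I_m -> 'I_n -> R) (beta : R) (s : 'I_m -> 'I_n -> R) : R :=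
  \sum_(i < m) \sum_(j < n | is_task kind i j) v i j * s i j `^ (beta - 1).

Definition feasible (R : realType) (n m : nat) (r : 'I_n -> R)
  (kind : 'I_m -> 'I_n -> option bool) (v : 'I_m -> 'I_n -> R)
  (beta E : R) (st s : 'I_m -> 'I_n -> R) : Prop :=
  [/\ (forall i j, is_task kind i j -> 0 < s i j),
      (forall i j j', is_task kind i j -> is_task kind i j' -> j != j' ->
          st i j + dur v s i j <= st i j' \/ st i j' + dur v s i j' <= st i j),
      (forall i j, is_task kind i j -> r j <= st i j),
      (forall i i' j, is_reduce kind i j -> is_map kind i' j ->
          st i' j + dur v s i' j <= st i j)
    & energy kind v beta s <= E].

(* C_j : maximum completion time of the tasks of job j (the default 0 is
   harmless: every job has a task and completion times of feasible
   schedules are >= r_j >= 0). *)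
Definition completion (R : realType) (n m : nat)
  (kind : 'I_m -> 'I_n -> option bool) (v : 'I_m -> 'I_n -> R)
  (st s : 'I_m -> 'I_n -> R) (j : 'I_n) : R :=
  \big[Num.max/0]_(i < m | is_task kind i j) (st i j + dur v s i j).

Definition objective (R : realType) (n m : nat) (w : 'I_n -> R)
  (kind : 'I_m -> 'I_n -> option bool) (v : 'I_m -> 'I_n -> R)
  (st s : 'I_m -> 'I_n -> R) : R :=
  \sum_(j < n) w j * completion kind v st s j.

Definition optimal (R : realType) (n m : nat) (w r : 'I_n -> R)
  (kind : 'I_m -> 'I_n -> option bool) (v : 'I_m -> 'I_n -> R)
  (beta E : R) (st s : 'I_m -> 'I_n -> R) : Prop :=
  feasible r kind v beta E st s /\
  forall st' s', feasible r kind v beta E st' s' ->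
    objective w kind v st s <= objective w kind v st' s'.

Definition ntasks (n m : nat) (kind : 'I_m -> 'I_n -> option bool) : nat :=
  #|[set p : 'I_m * 'I_n | is_task kind p.1 p.2]|.

(* max over the jobs (values are >= 0 here, so default 0 is harmless) *)
Definition maxj (R : realType) (n : nat) (f : 'I_n -> R) : R :=
  \big[Num.max/0]_(j < n) f j.
(* min over the jobs; the default x0 is taken to be one of the values. *)
Definition minj (R : realType) (n : nat) (f : 'I_n -> R) (x0 : R) : R :=
  \big[Num.min/x0]_(j < n) f j.

Definition vmax (R : realType) (n m : nat) (kind : 'I_m -> 'I_n -> option bool)
  (v : 'I_m -> 'I_n -> R) : R :=
  \big[Num.max/0]_(p : 'I_m * 'I_n | is_task kind p.1 p.2) v p.1 p.2.

(* t_max, with w_min computed using default w j0 for some job j0 *)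
Definition tmax (R : realType) (n m : nat) (w r : 'I_n -> R)
  (kind : 'I_m -> 'I_n -> option bool) (v : 'I_m -> 'I_n -> R)
  (beta E : R) (j0 : 'I_n) : R :=
  (maxj w / minj w (w j0)) *
  (n%:R * maxj r +
   n%:R * (n%:R + 1) *
     ((ntasks kind)%:R * vmax kind v `^ beta / E) `^ (1 / (beta - 1))).

(* Main.v *)
Require Import Defs.
From mathcomp Require Import all_boot all_order all_algebra.
From mathcomp Require Import all_classical all_reals all_analysis.
From mathcomp Require Import ring lra.
Import Order.TTheory GRing.Theory Num.Theory.
Local Open Scope ring_scope.


Lemma bigmax0_ge (R : realType) (I : finType) (P : pred I) (F : I -> R) i :
  P i -> F i <= \big[Num.max/0]_(k | P k) F k.
Proof. by move=> Pi; rewrite (bigD1 i) //= le_max lexx. Qed.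

Lemma bigmax0_ge0 (R : realType) (I : finType) (P : pred I) (F : I -> R) :
  0 <= \big[Num.max/0]_(k | P k) F k.
Proof. by elim/big_rec: _ => // k x _ hx; rewrite le_max hx orbT. Qed.

Lemma bigmin_le_term (R : realType) (I : finType) (F : I -> R) x0 i :
  \big[Num.min/x0]_(k : I) F k <= F i.
Proof. by rewrite (bigD1 i) //= ge_min lexx. Qed.

Lemma bigmin_gt0 (R : realType) (I : finType) (F : I -> R) x0 :
  0 < x0 -> (forall k, 0 < F k) -> 0 < \big[Num.min/x0]_(k : I) F k.
Proof. by move=> h0 hF; elim/big_ind: _ => // x y hx hy; rewrite lt_min hx. Qed.

Lemma sum_ge_term (R : realType) (I : finType) (P : pred I) (F : I -> R) i :
  (forall k, P k -> 0 <= F k) -> P i -> F i <= \sum_(k | P k) F k.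
Proof.
move=> h Pi; rewrite (bigD1 i) //= lerDl; apply: sumr_ge0 => k /andP[Pk _]; exact: h.
Qed.

Lemma powR_div (R : realType) (a b x : R) : 0 <= a -> 0 < b -> (a / b) `^ x = a `^ x / b `^ x.
Proof.
move=> a0 b0; have -> : a `^ x = (a / b) `^ x * b `^ x.
  rewrite -powRM.
  by rewrite divfK // gt_eqF.
  by rewrite divr_ge0 // ltW.
  exact: ltW.
by rewrite mulfK // gt_eqF // powR_gt0.
Qed.

Lemma sum_tri (R : realType) (n : nat) (a b : R) :
  \sum_(k < n) (a + (2 * k%:R + 2) * b) = n%:R * a + n%:R * (n%:R + 1) * b.
Proof.
elim: n => [|n IH]; first by rewrite big_ord0 !mul0r addr0.
rewrite big_ord_recr /= IH -natr1; ring.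
Qed.


Theorem proposition2 (R : realType) (n m : nat) (w r : 'I_n -> R)
  (kind : 'I_m -> 'I_n -> option bool) (v : 'I_m -> 'I_n -> R)
  (beta E : R) (st s : 'I_m -> 'I_n -> R) :
  valid_instance w r kind v beta E ->
  optimal w r kind v beta E st s ->
  forall (i : 'I_m) (j : 'I_n), is_task kind i j -> 0 < v i j ->
    v i j / tmax w r kind v beta E j <= s i j /\
    s i j <= (E / v i j) `^ (1 / (beta - 1)).
Proof.
move=> [wpos [rpos [hmap [hred [vnn [b1 E0]]]]]] [[sp ovl rel prec en] opt] i j ti vpos.
have b0 : 0 < beta - 1 by rewrite subr_gt0.
have sij := sp i j ti.
have term : v i j * s i j `^ (beta - 1) <= E.
  apply: le_trans en; rewrite /energy.
  have h1 : v i j * s i j `^ (beta - 1) <=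
      \sum_(j' < n | is_task kind i j') v i j' * s i j' `^ (beta - 1).
    apply: (@sum_ge_term R _ (fun j' => is_task kind i j') (fun j' => v i j' * s i j' `^ (beta - 1)) j) => // k _.
    by rewrite mulr_ge0 ?powR_ge0.
  apply: le_trans h1 _.
  apply: (@sum_ge_term R _ xpredT
    (fun i' => \sum_(j' < n | is_task kind i' j') v i' j' * s i' j' `^ (beta - 1)) i) => // k _.
  by apply: sumr_ge0 => k' _; rewrite mulr_ge0 ?powR_ge0.
split; last first.
  have -> : s i j = (s i j `^ (beta - 1)) `^ (1 / (beta - 1)).
    by rewrite -powRrM div1r mulfV ?gt_eqF // powRr1 // ltW.
  apply: ge0_ler_powR.
  - by rewrite divr_ge0 // ltW.
  - by rewrite nnegrE powR_ge0.
  - by rewrite nnegrE divr_ge0 // ltW.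
  by rewrite ler_pdivlMr // mulrC.
pose rM := maxj r.
pose vM := vmax kind v.
pose NT : R := (ntasks kind)%:R.
pose X := NT * vM `^ beta / E.
pose D := X `^ (1 / (beta - 1)).
pose wM := maxj w.
pose wm := minj w (w j).
have vle : forall k l, is_task kind k l -> v k l <= vM.
  move=> k l tkl.
  exact: (@bigmax0_ge R _ (fun p : 'I_m * 'I_n => is_task kind p.1 p.2)
            (fun p => v p.1 p.2) (k, l)).
have vMpos : 0 < vM by apply: lt_le_trans vpos (vle _ _ ti).
have NTpos : 0 < NT.
  rewrite /NT ltr0n /ntasks card_gt0; apply/set0Pn; exists (i, j); by rewrite inE.
have Xpos : 0 < X by rewrite /X divr_gt0 // mulr_gt0 // powR_gt0.
have Dpos : 0 < D by rewrite /D powR_gt0.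
have rM0 : 0 <= rM by exact: bigmax0_ge0.
have rle : forall l, r l <= rM.
  move=> l; exact: (@bigmax0_ge R _ xpredT r l).
have wle : forall l, w l <= wM.
  move=> l; exact: (@bigmax0_ge R _ xpredT w l).
have wmpos : 0 < wm by apply: bigmin_gt0.
have wmle : wm <= w j by apply: bigmin_le_term.
pose sig := vM / D.
have sigpos : 0 < sig by rewrite divr_gt0.
pose s' := fun (_ : 'I_m) (_ : 'I_n) => sig.
pose st' := fun k (l : 'I_n) =>
  rM + (2 * (l : nat)%:R + (if is_map kind k l then 0 else 1)) * D.
have durb : forall k l, is_task kind k l -> 0 <= dur v s' k l <= D.
  move=> k l tkl; rewrite /dur /s' divr_ge0 ?(ltW sigpos) ?vnn //=.
  by rewrite ler_pdivrMr // /sig mulrC divfK ?gt_eqF // vle.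
have lo : forall k (l : 'I_n), rM + 2 * (l : nat)%:R * D <= st' k l.
  move=> k l; rewrite /st' lerD2l ler_wpM2r ?(ltW Dpos) // lerDl.
  by case: (is_map kind k l).
have hi : forall k (l : 'I_n), is_task kind k l ->
    st' k l + dur v s' k l <= rM + (2 * (l : nat)%:R + 2) * D.
  move=> k l tkl; have /andP[d0 d1] := durb k l tkl.
  have hb : (if is_map kind k l then 0 else 1) <= 1 :> R by case: (is_map kind k l).
  rewrite /st'; move: hb; set b := (if _ then _ else _) => hb.
  have : 0 <= D by exact: ltW.
  nra.
have feas : feasible r kind v beta E st' s'.
  split.
  - by move=> *; exact: sigpos.
  - move=> k l1 l2 t1 t2 ne; case: (ltngtP l1 l2) => h.
    + left; apply: le_trans (hi _ _ t1) _; apply: le_trans _ (lo k l2).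
      have : (l1 : nat)%:R + 1 <= (l2 : nat)%:R :> R by rewrite natr1 ler_nat.
      have : 0 <= D by exact: ltW.
      nra.
    + right; apply: le_trans (hi _ _ t2) _; apply: le_trans _ (lo k l1).
      have : (l2 : nat)%:R + 1 <= (l1 : nat)%:R :> R by rewrite natr1 ler_nat.
      have : 0 <= D by exact: ltW.
      nra.
    + by rewrite (ord_inj h) eqxx in ne.
  - move=> k l _; apply: le_trans (rle l) _; rewrite /st' lerDl.
    apply: mulr_ge0; last exact: ltW Dpos.
    by apply: addr_ge0; [rewrite mulr_ge0 | case: (is_map kind k l)].
  - move=> k k' l hr hm.
    have tk' : is_task kind k' l by move: hm; rewrite /is_map /is_task => /eqP ->.
    have /andP[d0 d1] := durb k' l tk'.
    have mF : is_map kind k l = false by move: hr; rewrite /is_map /is_reduce => /eqP ->.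
    rewrite /st' hm mF.
    have : 0 <= D by exact: ltW.
    nra.
  - rewrite /energy /s'.
    pose c := sig `^ (beta - 1).
    have c0 : 0 <= c by exact: powR_ge0.
    apply: le_trans (_ : \sum_(k < m) \sum_(l < n | is_task kind k l) vM * c <= _).
      apply: ler_sum => k _; apply: ler_sum => l tl; by rewrite ler_wpM2r // vle.
    rewrite pair_big_dep /=.
    have -> : \sum_(p | true && is_task kind p.1 p.2) vM * c =
        \sum_(p in [set p : 'I_m * 'I_n | is_task kind p.1 p.2]) vM * c.
      by apply: eq_bigl => p; rewrite inE.
    rewrite sumr_const -mulr_natr -/(ntasks kind) -/NT.
    have vb0 : 0 < vM `^ (beta - 1) by exact: powR_gt0.
    have eX : X = NT * (vM `^ (beta - 1) * vM) / E.
      have e1 : vM `^ (beta - 1) * vM = vM `^ beta.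
        rewrite -[X in _ * X](powRr1 (ltW vMpos)) -powRD ?subrK //.
        by rewrite (gt_eqF vMpos) implybT.
      by rewrite /X e1.
    have eD : D `^ (beta - 1) = X.
      by rewrite /D -powRrM div1r mulVf ?gt_eqF // powRr1 // ltW.
    rewrite /c /sig powR_div ?(ltW vMpos) // eD eX.
    rewrite le_eqVlt; apply/orP; left; apply/eqP; field.
    by rewrite !gt_eqF.
have obj' : objective w kind v st' s' <= wM * (n%:R * rM + n%:R * (n%:R + 1) * D).
  rewrite /objective -sum_tri mulr_sumr; apply: ler_sum => l _.
  apply: ler_pM; [exact: ltW (wpos l) | exact: bigmax0_ge0 | exact: wle | ].
  apply: bigmax_le => [|k tk]; last exact: hi.
  apply: addr_ge0 => //; apply: mulr_ge0; last exact: ltW Dpos.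
  by apply: addr_ge0; rewrite ?mulr_ge0.
have objl : wm * dur v s i j <= objective w kind v st s.
  have d0 : 0 <= dur v s i j by rewrite /dur divr_ge0 ?ltW.
  apply: le_trans (_ : w j * completion kind v st s j <= _).
    apply: ler_pM => //; first exact: ltW wmpos.
    apply: le_trans (_ : st i j + dur v s i j <= _).
      by rewrite lerDr (le_trans (rpos j)) // rel.
    exact: (@bigmax0_ge R _ (fun k => is_task kind k j) (fun k => st k j + dur v s k j) i).
  apply: (@sum_ge_term R _ xpredT (fun l => w l * completion kind v st s l) j) => // l _.
  by rewrite mulr_ge0 ?bigmax0_ge0 // ltW.
pose Y := n%:R * rM + n%:R * (n%:R + 1) * D.
have key : wm * dur v s i j <= wM * Y := le_trans objl (le_trans (opt _ _ feas) obj').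
have ddpos : 0 < dur v s i j by rewrite /dur divr_gt0.
have tm : tmax w r kind v beta E j = wM * Y / wm by rewrite /tmax -/wM -/wm mulrAC.
have dle : dur v s i j <= tmax w r kind v beta E j by rewrite tm ler_pdivlMr // mulrC.
have tpos : 0 < tmax w r kind v beta E j by apply: lt_le_trans dle.
rewrite ler_pdivrMr // mulrC -ler_pdivrMr //.
Qed.
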